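(* For $K=2$ users and $Q\ge1$ layers, with $\Pr[M\ge q]>0$ and $\mathbb{E}[N_u]>0$, the region $\mathcal{C}^{\rm in}$ equals the set of $(R_1,R_2)\in\mathbb{R}_+^2$ for which there exist $R_{u,q}\ge0$ with $R_u=\sum_{q=1}^QR_{u,q}$ such that $$\max_{q}\frac{R_{1,q}+R_{2,q}}{\Pr[M\ge q]}\le1\quad\text{and}\quad \frac{1}{\mathbb{E}[N_u]}\sum_{q=1}^Q\Big(R_{u,q}+R_{\bar u,q}\frac{\Pr[N_u\ge q]}{\Pr[M\ge q]}\Big)\le1\ \text{ for }(u,\bar u)\in\{(1,2),(2,1)\};$$ that is, $\mathcal{C}^{\rm in}$ has the same form as $\mathcal{S}^{\rm in}$ with arrival rates replaced by message rates (and strict inequalities replaced by non-strict ones).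
   Context: Channel: two-user LPE-BC with $Q$ layers; the state $(N_1,N_2)\in\{0,\dots,Q\}^2$ has an arbitrary joint law, $M:=\max(N_1,N_2)$, $[x]^+=\max(0,x)$. For nonnegative reals $k_{u,q}$ define $t^{\rm unc}_q=\frac{k_{1,q}+k_{2,q}}{\Pr[M\ge q]}$, $t^{\rm unc}=\max_q t^{\rm unc}_q$, $k^{\rm rem}_{u,q}=k_{u,q}(1-\frac{\Pr[N_u\ge q]}{\Pr[M\ge q]})$, $k^{\rm rem}_u=\big[\sum_{q=1}^Q(k^{\rm rem}_{u,q}-(t^{\rm unc}-t^{\rm unc}_q)\Pr[N_u\ge q])\big]^+$, $t^{\rm NC}=\max_u k^{\rm rem}_u/\mathbb{E}[N_u]$, and $\mathcal{C}^{\rm in}=\bigcup_{t>0,k_{u,q}\ge0}\{(R_1,R_2): t^{\rm unc}+t^{\rm NC}\le t,\ R_u=\frac1t\sum_q k_{u,q}\}$. $\mathcal{S}^{\rm in}$ is the set of $(\lambda_1,\lambda_2)\in\mathbb{R}^2_+$ for which there exist $\lambda_{u,q}\ge0$ with $\lambda_u=\sum_q\lambda_{u,q}$, $\frac{\lambda_{1,q}+\lambda_{2,q}}{\Pr[M\ge q]}<1$ for all $q$, and $\sum_q(\lambda_{u,q}+\lambda_{\bar u,q}\frac{\Pr[N_u\ge q]}{\Pr[M\ge q]})<\mathbb{E}[N_u]$ for $(u,\bar u)\in\{(1,2),(2,1)\}$. *)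

(* Defs.v *)
From HB Require Import structures.
From mathcomp Require Import all_boot all_order all_algebra.
Set Implicit Arguments. Unset Strict Implicit. Unset Printing Implicit Defensive.
Import Order.TTheory GRing.Theory Num.Theory.
Local Open Scope ring_scope.

Section LPE.
Variable R : realFieldType.
Variable Q : nat.
(* joint pmf of the channel state (N_1, N_2) in {0..Q}^2 *)
Variable p : {ffun 'I_Q.+1 * 'I_Q.+1 -> R}.

(* N_u of a state; user 1 is index 0, user 2 is index 1 *)
Definition Nst (u : 'I_2) (s : 'I_Q.+1 * 'I_Q.+1) : nat :=
  if u == ord0 then val s.1 else val s.2.

Definition is_pmf : Prop := (forall s, 0 <= p s) /\ \sum_s p s = 1.

Definition PrN (u : 'I_2) (q : nat) : R := \sum_(s | (q <= Nst u s)%N) p s.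
Definition PrM (q : nat) : R :=
  \sum_(s | (q <= maxn (val s.1) (val s.2))%N) p s.
Definition EN (u : 'I_2) : R := \sum_s p s * (Nst u s)%:R.

(* k u q = k_{u,q}, layers q = 1..Q *)
Definition tunc_q (k : 'I_2 -> nat -> R) (q : nat) : R :=
  (k ord0 q + k (@Ordinal 2 1 isT) q) / PrM q.
Definition tunc (k : 'I_2 -> nat -> R) : R :=
  \big[Num.max/0]_(1 <= q < Q.+1) tunc_q k q.
Definition krem_q (k : 'I_2 -> nat -> R) (u : 'I_2) (q : nat) : R :=
  k u q * (1 - PrN u q / PrM q).
Definition krem (k : 'I_2 -> nat -> R) (u : 'I_2) : R :=
  Num.max 0 (\sum_(1 <= q < Q.+1)
                (krem_q k u q - (tunc k - tunc_q k q) * PrN u q)).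
Definition tNC (k : 'I_2 -> nat -> R) : R :=
  Num.max (krem k ord0 / EN ord0)
          (krem k (@Ordinal 2 1 isT) / EN (@Ordinal 2 1 isT)).

Definition Cin (R1 R2 : R) : Prop :=
  exists t : R, 0 < t /\
  exists k : 'I_2 -> nat -> R, (forall u q, 0 <= k u q) /\
    tunc k + tNC k <= t /\
    R1 = t^-1 * \sum_(1 <= q < Q.+1) k ord0 q /\
    R2 = t^-1 * \sum_(1 <= q < Q.+1) k (@Ordinal 2 1 isT) q.

Definition Cform (R1 R2 : R) : Prop :=
  0 <= R1 /\ 0 <= R2 /\
  exists r : 'I_2 -> nat -> R, (forall u q, 0 <= r u q) /\
    R1 = \sum_(1 <= q < Q.+1) r ord0 q /\
    R2 = \sum_(1 <= q < Q.+1) r (@Ordinal 2 1 isT) q /\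
    \big[Num.max/0]_(1 <= q < Q.+1)
       ((r ord0 q + r (@Ordinal 2 1 isT) q) / PrM q) <= 1 /\
    (forall u ubar : 'I_2, u != ubar ->
       (EN u)^-1 * \sum_(1 <= q < Q.+1)
          (r u q + r ubar q * (PrN u q / PrM q)) <= 1).
End LPE.

(* Main.v *)
Require Import Defs.
From HB Require Import structures.
From mathcomp Require Import all_boot all_order all_algebra.
From mathcomp Require Import ring lra.
Import Order.TTheory GRing.Theory Num.Theory.
Local Open Scope ring_scope.

Lemma bigmax_le_seq (R : realFieldType) (r : seq nat) (F : nat -> R) c :
  0 <= c -> (forall i, i \in r -> F i <= c) ->
  \big[Num.max/0]_(i <- r) F i <= c.
Proof.
move=> c0; elim: r => [|a r IH] H; first by rewrite big_nil.
rewrite big_cons ge_max H ?mem_head //= IH // => i Hi.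
by apply: H; rewrite in_cons Hi orbT.
Qed.

Lemma le_bigmax_seq (R : realFieldType) (r : seq nat) (F : nat -> R) i :
  i \in r -> F i <= \big[Num.max/0]_(j <- r) F j.
Proof.
elim: r => [|a r IH] //; rewrite in_cons big_cons le_max.
case/orP=> [/eqP ->|Hi]; first by rewrite lexx.
by rewrite IH ?orbT.
Qed.

Lemma sum_ind_nat (R : realFieldType) (Q n : nat) : (n <= Q)%N ->
  \sum_(1 <= q < Q.+1) (((q <= n)%N)%:R : R) = n%:R.
Proof.
move=> nQ.
rewrite (@big_cat_nat _ _ _ n.+1) //=.
rewrite [X in _ + X]big_nat_cond [X in _ + X]big1; last first.
  by move=> q /andP[/andP[H1 _] _]; rewrite leqNgt H1.
rewrite addr0 big_nat_cond (eq_bigr (fun _ => 1)); last first.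
  by move=> q /andP[/andP[_ H] _]; rewrite -ltnS H.
by rewrite -big_nat_cond sumr_const_nat subn1.
Qed.

Lemma EN_sum (R : realFieldType) (Q : nat) (p : {ffun 'I_Q.+1 * 'I_Q.+1 -> R}) u :
  EN p u = \sum_(1 <= q < Q.+1) PrN p u q.
Proof.
have HN : forall s : 'I_Q.+1 * 'I_Q.+1, (Nst u s <= Q)%N.
  by move=> s; rewrite /Nst; case: (u == ord0); [have := ltn_ord s.1|have := ltn_ord s.2].
transitivity (\sum_s \sum_(1 <= q < Q.+1) p s * ((q <= Nst u s)%N)%:R).
  by apply: eq_bigr => s _; rewrite -mulr_sumr sum_ind_nat ?HN.
rewrite (exchange_big_dep xpredT) //=; apply: eq_bigr => q _.
rewrite /PrN [RHS]big_mkcond /=; apply: eq_bigr => s _.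
by case: ifP => _; rewrite ?mulr1 ?mulr0.
Qed.

Lemma krem_sum_eq (R : realFieldType) (Q : nat) (p : {ffun 'I_Q.+1 * 'I_Q.+1 -> R})
  (k : 'I_2 -> nat -> R) u ub :
  (forall q, k ord0 q + k (@Ordinal 2 1 isT) q = k u q + k ub q) ->
  \sum_(1 <= q < Q.+1) (krem_q p k u q - (tunc p k - tunc_q p k q) * PrN p u q)
  = \sum_(1 <= q < Q.+1) (k u q + k ub q * (PrN p u q / PrM p q))
    - tunc p k * EN p u.
Proof.
move=> H; rewrite EN_sum mulr_sumr -sumrB; apply: eq_bigr => q _.
rewrite /krem_q /tunc_q H; ring.
Qed.

Lemma ord2_cases (u ub : 'I_2) : u != ub ->
  (u = ord0 /\ ub = @Ordinal 2 1 isT) \/ (u = @Ordinal 2 1 isT /\ ub = ord0).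
Proof.
case: u => [[|[|m]] Hu] //; case: ub => [[|[|n]] Hn] // _.
- by left; split; apply: val_inj.
- by right; split; apply: val_inj.
Qed.

Theorem lemma3 (R : realFieldType) (Q : nat)
  (p : {ffun 'I_Q.+1 * 'I_Q.+1 -> R}) :
  (1 <= Q)%N ->
  is_pmf p ->
  (forall q : nat, (1 <= q <= Q)%N -> 0 < PrM p q) ->
  (forall u : 'I_2, 0 < EN p u) ->
  forall R1 R2 : R, Cin p R1 R2 <-> Cform p R1 R2.
Proof.
move=> _ _ _ HE R1 R2; split.
- case=> t [t0 [k [Hk [Ht [-> ->]]]]].
  have ti0 : 0 <= t^-1 by rewrite invr_ge0 ltW.
  have tNC0 : 0 <= tNC p k.
    rewrite /tNC le_max; apply/orP; left.
    by apply: divr_ge0; [rewrite /krem le_max lexx | apply: ltW].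
  have Tt : tunc p k <= t by lra.
  have le1 : forall x, x <= t -> t^-1 * x <= 1.
    move=> x xt; apply: (le_trans (ler_wpM2l ti0 xt)).
    by rewrite mulVf // gt_eqF.
  split; first by apply: mulr_ge0 => //; apply: sumr_ge0.
  split; first by apply: mulr_ge0 => //; apply: sumr_ge0.
  exists (fun u q => t^-1 * k u q); split.
    by move=> u q; apply: mulr_ge0.
  split; first by rewrite mulr_sumr.
  split; first by rewrite mulr_sumr.
  split.
    apply: bigmax_le_seq => // q Hq.
    have -> : (t^-1 * k ord0 q + t^-1 * k (@Ordinal 2 1 isT) q) / PrM p q
            = t^-1 * tunc_q p k q by rewrite /tunc_q; ring.
    apply: le1; apply: le_trans Tt.
    by rewrite /tunc; apply: le_bigmax_seq.
  move=> u ub Hne.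
  have Hsum : forall q, k ord0 q + k (@Ordinal 2 1 isT) q = k u q + k ub q.
    by case: (@ord2_cases _ _ Hne) => [[-> ->]|[-> ->]] q //; rewrite addrC.
  set S := \sum_(1 <= q < Q.+1) (k u q + k ub q * (PrN p u q / PrM p q)).
  have -> : \sum_(1 <= q < Q.+1)
      (t^-1 * k u q + t^-1 * k ub q * (PrN p u q / PrM p q)) = t^-1 * S.
    by rewrite /S mulr_sumr; apply: eq_bigr => q _; ring.
  have E0 := HE u.
  have Hk1 : \sum_(1 <= q < Q.+1)
      (krem_q p k u q - (tunc p k - tunc_q p k q) * PrN p u q) <= krem p k u.
    by rewrite /krem le_max lexx orbT.
  rewrite (@krem_sum_eq _ _ p k _ _ Hsum) -/S in Hk1.
  have Hk2 : krem p k u <= tNC p k * EN p u.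
    rewrite -ler_pdivrMr //.
    by case: (@ord2_cases _ _ Hne) => [[-> _]|[-> _]]; rewrite /tNC le_max lexx ?orbT.
  have HS : S <= t * EN p u.
    have : (tunc p k + tNC p k) * EN p u <= t * EN p u.
      by apply: ler_wpM2r => //; apply: ltW.
    lra.
  have Ei0 : 0 <= (EN p u)^-1 by rewrite invr_ge0 ltW.
  apply: (le_trans (ler_wpM2l Ei0 (ler_wpM2l ti0 HS))).
  have -> : (EN p u)^-1 * (t^-1 * (t * EN p u)) = 1.
    by field; apply/andP; split; rewrite gt_eqF.
  by [].
- case=> H1 [H2 [r [Hr [-> [-> [Hmax Hu]]]]]].
  exists 1; split; first by [].
  exists r; split; first by [].
  split; last by rewrite invr1 !mul1r.
  have HT : tunc p r <= 1 by [].
  have key : forall u ub, u != ub ->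
      (forall q, r ord0 q + r (@Ordinal 2 1 isT) q = r u q + r ub q) ->
      krem p r u / EN p u <= 1 - tunc p r.
    move=> u ub Hne Hs; have E0 := HE u.
    rewrite ler_pdivrMr // /krem ge_max; apply/andP; split.
      by apply: mulr_ge0; [lra | apply: ltW].
    rewrite (@krem_sum_eq _ _ p r _ _ Hs).
    have := Hu u ub Hne.
    rewrite mulrC ler_pdivrMr // mul1r => HS.
    lra.
  have K0 := key ord0 (@Ordinal 2 1 isT) isT (fun q => erefl).
  have K1 := key (@Ordinal 2 1 isT) ord0 isT (fun q => addrC _ _).
  have : tNC p r <= 1 - tunc p r by rewrite /tNC ge_max K0 K1.
  lra.
Qed.
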